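(* Let $\Sigma$ be a ranked alphabet, $B$ a strong bimonoid, $\mathcal{A}=(Q,\delta,F)$ a $(\Sigma,B)$-wta and $q_1,\dots,q_n$ an enumeration of the elements of $Q$. Then there is a final variant $\mathcal{C}$ of $\mathrm{acc}\big(\Pi\big((\mathrm{der}(h^{q_i}_{\mathrm{V}(\mathcal{A})})\mid i\in[n])\big)\big)$ such that $\mathcal{N}(\mathcal{A})$ and $\mathcal{C}$ are isomorphic.
   Context: Ranked alphabet $\Sigma$ ($\Sigma^{(0)}\ne\emptyset$), trees $T_\Sigma$; strong bimonoid $(B,\oplus,\otimes,\mathbb{0},\mathbb{1})$ (commutative monoid $(B,\oplus,\mathbb{0})$, monoid $(B,\otimes,\mathbb{1})$, $\mathbb{0}\ne\mathbb{1}$, $\mathbb{0}$ absorbing, no distributivity). $(\Sigma,B)$-wta $\mathcal{A}=(Q,\delta,F)$: $Q$ finite nonempty, $\delta_k:Q^k\times\Sigma^{(k)}\times Q\to B$, $F:Q\to B$. Vector algebra $\mathrm{V}(\mathcal{A})=(B^Q,\delta_{\mathcal{A}})$, $\delta_{\mathcal{A}}(\sigma)(v_1,\dots,v_k)_q=\bigoplus_{p_1,\dots,p_k}\big(\bigotimes_{i=1}^k(v_i)_{p_i}\big)\otimes\delta_k(p_1\dots p_k,\sigma,q)$; $h_{\mathrm{V}(\mathcal{A})}:T_\Sigma\to B^Q$ the unique homomorphism from the term algebra; $h^q_{\mathrm{V}(\mathcal{A})}:T_\Sigma\to B$, $h^q_{\mathrm{V}(\mathcal{A})}(\xi)=h_{\mathrm{V}(\mathcal{A})}(\xi)_q$.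 A $(\Sigma,B)$-algebra is $\mathcal{K}=(P,\theta,G)$, $(P,\theta)$ a $\Sigma$-algebra, $G:P\to B$; $h_{\mathcal{K}}:T_\Sigma\to P$ the unique homomorphism. A final variant of $\mathcal{K}$ is $(P,\theta,G')$ for any $G':P\to B$. $\mathrm{acc}(\mathcal{K})$ is the $(\Sigma,B)$-subalgebra with carrier $\mathrm{im}(h_{\mathcal{K}})$ (the smallest subalgebra), restricted operations and restricted $G$. Two $(\Sigma,B)$-algebras $(P,\theta,G)$, $(P',\theta',G')$ are isomorphic if there is a bijective $\Sigma$-algebra homomorphism $\varphi:P\to P'$ with $G_p=G'_{\varphi(p)}$ for all $p$. Direct product $\Pi((\mathcal{K}_i)_{i\in[n]})$ of $\mathcal{K}_i=(P_i,\theta_i,G_i)$: carrier $P_1\times\dots\times P_n$, componentwise operations, root weight $(p_1,\dots,p_n)\mapsto\bigotimes_{i=1}^n(G_i)_{p_i}$. Contexts: trees over $\Sigma\cup\{\square\}$ with exactly one occurrence of the new nullary symbol $\square$ (set $C_\Sigma$); $c[\xi]$ substitutes $\xi$ for $\square$. For $r:T_\Sigma\to B$ and $\xi\in T_\Sigma$, $\xi^{-1}r:C_\Sigma\to B$, $(\xi^{-1}r)(c)=r(c[\xi])$. The derivative algebra $\mathrm{der}(r)$ has carrier $\{\xi^{-1}r\mid\xi\in T_\Sigma\}$, operations $\theta(\sigma)(\xi_1^{-1}r,\dots,\xi_k^{-1}r)=\sigma(\xi_1,\dots,\xi_k)^{-1}r$, root weights $\xi^{-1}r\mapsto r(\xi)$.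 Nerode algebra $\mathcal{N}(\mathcal{A})=(Q_{\mathcal{N}},\theta_{\mathcal{N}},F_{\mathcal{N}})$: smallest subalgebra of $\mathrm{V}(\mathcal{A})$ with $(F_{\mathcal{N}})_v=\bigoplus_q v_q\otimes F_q$. *)

(* Defs.v *)
From mathcomp Require Import all_boot.
From Stdlib Require Import ClassicalEpsilon FunctionalExtensionality.
Set Implicit Arguments.
Unset Strict Implicit.
Unset Printing Implicit Defensive.

Record ranked_alphabet := RankedAlphabet {
  ra_sym :> finType;
  ra_rank : ra_sym -> nat;
  ra_nullary : exists s, ra_rank s = 0 }.

Inductive tree (S : ranked_alphabet) : Type :=
  Node (s : S) (ts : 'I_(ra_rank s) -> tree S).
Arguments Node {S} s ts.

Record strong_bimonoid := StrongBimonoid {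
  sb_car :> Type;
  sb_add : sb_car -> sb_car -> sb_car;
  sb_mul : sb_car -> sb_car -> sb_car;
  sb_zero : sb_car;
  sb_one : sb_car;
  sb_addA : forall x y z, sb_add x (sb_add y z) = sb_add (sb_add x y) z;
  sb_addC : forall x y, sb_add x y = sb_add y x;
  sb_add0 : forall x, sb_add sb_zero x = x;
  sb_mulA : forall x y z, sb_mul x (sb_mul y z) = sb_mul (sb_mul x y) z;
  sb_mul1l : forall x, sb_mul sb_one x = x;
  sb_mul1r : forall x, sb_mul x sb_one = x;
  sb_mul0l : forall x, sb_mul sb_zero x = sb_zero;
  sb_mul0r : forall x, sb_mul x sb_zero = sb_zero;
  sb_zero_neq_one : sb_zero <> sb_one }.

Definition sig_ops (S : ranked_alphabet) (P : Type) :=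
  forall s : S, ('I_(ra_rank s) -> P) -> P.

Fixpoint hom (S : ranked_alphabet) (P : Type) (op : sig_ops S P) (t : tree S) : P :=
  match t with Node s ts => op s (fun i => hom op (ts i)) end.

Record sbalg (S : ranked_alphabet) (B : strong_bimonoid) := SBAlg {
  alg_car : Type;
  alg_op : sig_ops S alg_car;
  alg_root : alg_car -> B }.
Arguments SBAlg {S B} alg_car alg_op alg_root.
Arguments alg_car {S B} s.
Arguments alg_op {S B} s _ _.
Arguments alg_root {S B} s _.

Definition h_alg S B (K : sbalg S B) : tree S -> alg_car K := hom (alg_op K).

Definition final_variant S B (K : sbalg S B) (G' : alg_car K -> B) : sbalg S B :=
  SBAlg (alg_car K) (alg_op K) G'.

Definition acc_car S B (K : sbalg S B) : Type := {p : alg_car K | exists t, h_alg K t = p}.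

Lemma acc_closed S B (K : sbalg S B) (s : S) (ps : 'I_(ra_rank s) -> acc_car K) :
  exists t, h_alg K t = alg_op K s (fun i => sval (ps i)).
Proof.
pose ts := fun i => proj1_sig (constructive_indefinite_description _ (proj2_sig (ps i))).
exists (Node s ts); rewrite /h_alg /=; congr (alg_op K s); apply: (@functional_extensionality_dep _ _).
move=> i; rewrite /ts; case: constructive_indefinite_description => t ht /=.
exact: ht.
Qed.

Definition acc S B (K : sbalg S B) : sbalg S B :=
  SBAlg (acc_car K)
        (fun s ps => exist _ (alg_op K s (fun i => sval (ps i))) (acc_closed ps))
        (fun p => alg_root K (sval p)).

Definition sbalg_iso S B (K K' : sbalg S B) : Prop :=
  exists phi : alg_car K -> alg_car K',
    [/\ bijective phi,
        (forall s ps, phi (alg_op K s ps) = alg_op K' s (fun i => phi (ps i))) &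
        (forall p, alg_root K p = alg_root K' (phi p))].

Definition prod_alg S B (n : nat) (K : 'I_n -> sbalg S B) : sbalg S B :=
  SBAlg (forall i : 'I_n, alg_car (K i))
        (fun s ps => fun i => alg_op (K i) s (fun j => ps j i))
        (fun p => \big[@sb_mul B/sb_one B]_(i < n) alg_root (K i) (p i)).

Definition box_alphabet (S : ranked_alphabet) : ranked_alphabet :=
  @RankedAlphabet (option S)%type
    (fun o => if o is Some s then ra_rank s else 0) (ex_intro _ None erefl).

Fixpoint count_box S (c : tree (box_alphabet S)) : nat :=
  match c with
  | Node o ts => (if o is None then 1 else 0) + \sum_(i < _) count_box (ts i)
  end.

Definition context (S : ranked_alphabet) : Type :=
  {c : tree (box_alphabet S) | count_box c = 1}.

Fixpoint subst S (c : tree (box_alphabet S)) (xi : tree S) : tree S :=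
  match c with
  | Node o ts =>
    match o as o' return ('I_(ra_rank (r:=box_alphabet S) o') -> tree (box_alphabet S)) -> tree S with
    | None => fun _ => xi
    | Some s => fun ts' => Node s (fun i => subst (ts' i) xi)
    end ts
  end.

Definition deriv S (B : strong_bimonoid) (r : tree S -> B) (xi : tree S) : context S -> B :=
  fun c => r (subst (sval c) xi).

Definition der_car S (B : strong_bimonoid) (r : tree S -> B) : Type :=
  {f : context S -> B | exists xi, deriv r xi = f}.

Definition der_rep S (B : strong_bimonoid) (r : tree S -> B) (f : der_car r) : tree S :=
  proj1_sig (constructive_indefinite_description _ (proj2_sig f)).

Definition der_mk S (B : strong_bimonoid) (r : tree S -> B) (xi : tree S) : der_car r :=
  exist _ (deriv r xi) (ex_intro _ xi erefl).

(* der(r); operations and root weights via representatives (well defined) *)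
Definition der_alg S (B : strong_bimonoid) (r : tree S -> B) : sbalg S B :=
  SBAlg (der_car r)
        (fun s fs => der_mk r (Node s (fun i => der_rep (fs i))))
        (fun f => r (der_rep f)).

Record wta (S : ranked_alphabet) (B : strong_bimonoid) := Wta {
  wta_Q : finType;
  wta_Q_nonempty : 0 < #|wta_Q|;
  wta_delta : forall s : S, {ffun 'I_(ra_rank s) -> wta_Q} -> wta_Q -> B;
  wta_F : wta_Q -> B }.
Arguments wta_Q {S B} w.
Arguments wta_delta {S B} w s _ _.
Arguments wta_F {S B} w _.

Definition vec_op S B (A : wta S B) : sig_ops S (wta_Q A -> B) :=
  fun s vs q =>
    \big[@sb_add B/sb_zero B]_(p : {ffun 'I_(ra_rank s) -> wta_Q A})
       sb_mul (\big[@sb_mul B/sb_one B]_(i < ra_rank s) vs i (p i)) (wta_delta A s p q).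

Definition h_V S B (A : wta S B) : tree S -> (wta_Q A -> B) := hom (@vec_op S B A).
Arguments h_V {S B} A _ _.

Definition h_Vq S B (A : wta S B) (q : wta_Q A) : tree S -> B := fun xi => h_V A xi q.
Arguments h_Vq {S B} A q _.

Definition vec_alg_FN S B (A : wta S B) : sbalg S B :=
  SBAlg (wta_Q A -> B) (@vec_op S B A)
        (fun v => \big[@sb_add B/sb_zero B]_(q : wta_Q A) sb_mul (v q) (wta_F A q)).

Definition nerode S B (A : wta S B) : sbalg S B := acc (vec_alg_FN A).

Arguments final_variant {S B} K G'.
Arguments sbalg_iso {S B} K K'.
Arguments acc {S B} K.
Arguments nerode {S B} A.
Arguments prod_alg {S B n} K.
Arguments der_alg {S B} r.

(* Main.v *)
From Stdlib Require Import ProofIrrelevance FunctionalExtensionality ClassicalEpsilon.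
Require Import Defs.
From mathcomp Require Import all_boot.
Set Implicit Arguments.
Unset Strict Implicit.
Unset Printing Implicit Defensive.

Lemma sig_eqP (T : Type) (P : T -> Prop) (x y : {a | P a}) : sval x = sval y -> x = y.
Proof. case: x y => [a pa] [b pb] /= e; subst b; f_equal; apply: proof_irrelevance. Qed.

Definition mkacc (S : ranked_alphabet) B (K : sbalg S B) (t : tree S) : acc_car K :=
  exist _ (h_alg K t) (ex_intro _ t erefl).

Definition pick (S : ranked_alphabet) B (K : sbalg S B) (x : acc_car K) : tree S :=
  proj1_sig (constructive_indefinite_description _ (proj2_sig x)).

Lemma pickP (S : ranked_alphabet) B (K : sbalg S B) (x : acc_car K) : h_alg K (pick x) = sval x.
Proof. rewrite /pick; case: constructive_indefinite_description => t ht //. Qed.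

Lemma mk_pick (S : ranked_alphabet) B (K : sbalg S B) (x : acc_car K) : x = mkacc K (pick x).
Proof. apply: sig_eqP => /=; by rewrite pickP. Qed.

Lemma opE (S : ranked_alphabet) B (K : sbalg S B) (s : S) (ts : 'I_(ra_rank s) -> tree S) :
  alg_op (acc K) s (fun i => mkacc K (ts i)) = mkacc K (Node s ts).
Proof. by apply: sig_eqP. Qed.

Fixpoint lift (S : ranked_alphabet) (t : tree S) : tree (box_alphabet S) :=
  match t with Node s ts => @Node (box_alphabet S) (Some s) (fun i => lift (ts i)) end.

Lemma count_lift (S : ranked_alphabet) (t : tree S) : count_box (lift t) = 0.
Proof. elim: t => s ts IH /=. rewrite add0n big1 //. Qed.

Lemma subst_lift (S : ranked_alphabet) (t : tree S) xi : subst (lift t) xi = t.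
Proof.
elim: t => s ts IH /=; congr Node; apply: functional_extensionality => i; exact: IH.
Qed.

Fixpoint ccomp (S : ranked_alphabet) (c d : tree (box_alphabet S)) : tree (box_alphabet S) :=
  match c with
  | Node o ts =>
    match o as o' return ('I_(ra_rank (r:=box_alphabet S) o') -> tree (box_alphabet S)) -> tree (box_alphabet S) with
    | None => fun _ => d
    | Some s => fun ts' => @Node (box_alphabet S) (Some s) (fun i => ccomp (ts' i) d)
    end ts
  end.

Lemma subst_ccomp (S : ranked_alphabet) (c d : tree (box_alphabet S)) xi :
  subst (ccomp c d) xi = subst c (subst d xi).
Proof.
elim: c => o ts IH; case: o ts IH => [s|] ts IH //=.
congr Node; apply: functional_extensionality => i; exact: IH.
Qed.

Lemma count_ccomp (S : ranked_alphabet) (c d : tree (box_alphabet S)) :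
  count_box (ccomp c d) = count_box c * count_box d.
Proof.
elim: c => o ts IH; case: o ts IH => [s|] ts IH /=.
  rewrite !add0n big_distrl /=; apply: eq_bigr => i _; exact: IH.
by rewrite big_ord0 addn0 mul1n.
Qed.

Definition hole (S : ranked_alphabet) (s : S) (ts : 'I_(ra_rank s) -> tree S) (k : 'I_(ra_rank s)) :
  tree (box_alphabet S) :=
  @Node (box_alphabet S) (Some s)
    (fun j => if j == k then @Node (box_alphabet S) None (fun _ => lift (ts j)) else lift (ts j)).

Lemma count_hole (S : ranked_alphabet) (s : S) ts k : count_box (@hole S s ts k) = 1.
Proof.
rewrite /= add0n (bigD1 k) //= eqxx /= big_ord0 big1 // => j /negbTE ->.
exact: count_lift.
Qed.

Lemma subst_hole (S : ranked_alphabet) (s : S) ts k xi :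
  subst (@hole S s ts k) xi = Node s (fun j => if j == k then xi else ts j).
Proof.
rewrite /=; congr Node; apply: functional_extensionality => j.
case: (j == k) => //; exact: subst_lift.
Qed.

Definition equivr (S : ranked_alphabet) (B : Type) (r : tree S -> B) t t' :=
  forall c : context S, r (subst (sval c) t) = r (subst (sval c) t').

Lemma equiv_step (S : ranked_alphabet) (B : Type) (r : tree S -> B) (s : S) ts k t' :
  equivr r (ts k) t' -> equivr r (Node s ts) (Node s (fun j => if j == k then t' else ts j)).
Proof.
move=> H c.
have E : Node s ts = subst (hole ts k) (ts k).
  rewrite subst_hole; congr Node; apply: functional_extensionality => j.
  by case: eqP => // ->.
have cc : count_box (ccomp (sval c) (hole ts k)) = 1.
  by rewrite count_ccomp count_hole (proj2_sig c).
rewrite E -subst_hole -!subst_ccomp.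
exact: (H (exist _ _ cc)).
Qed.

Lemma equiv_trans (S : ranked_alphabet) (B : Type) (r : tree S -> B) a b c :
  equivr r a b -> equivr r b c -> equivr r a c.
Proof. by move=> H1 H2 x; rewrite H1 H2. Qed.

Lemma equiv_cong (S : ranked_alphabet) (B : Type) (r : tree S -> B) (s : S) ts ts' :
  (forall i, equivr r (ts i) (ts' i)) -> equivr r (Node s ts) (Node s ts').
Proof.
move=> H.
pose mix m := fun j : 'I_(ra_rank s) => if j < m then ts' j else ts j.
suff: forall m, equivr r (Node s ts) (Node s (mix m)).
  move/(_ (ra_rank s)).
  have -> : mix (ra_rank s) = ts'.
    by apply: functional_extensionality => j; rewrite /mix ltn_ord.
  done.
elim=> [|m IH].
  have -> : mix 0 = ts by apply: functional_extensionality.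
  by [].
case: (ltnP m (ra_rank s)) => hm; last first.
  have -> : mix m.+1 = mix m.
    apply: functional_extensionality => j; rewrite /mix.
    have h1 : j < m by apply: leq_trans (ltn_ord j) hm.
    by rewrite ltnS (ltnW h1) h1.
  done.
apply: (equiv_trans IH).
have -> : mix m.+1 = fun j => if j == Ordinal hm then ts' (Ordinal hm) else mix m j.
  apply: functional_extensionality => j; rewrite /mix ltnS leq_eqVlt.
  case: (j =P Ordinal hm) => [->|ne] /=; first by rewrite eqxx.
  have -> : (nat_of_ord j == m) = false.
    apply/eqP => e; apply: ne; exact: val_inj.
  by [].
apply: equiv_step.
have -> : mix m (Ordinal hm) = ts (Ordinal hm) by rewrite /mix /= ltnn.
exact: H.
Qed.

Lemma der_rep_spec (S : ranked_alphabet) (B : strong_bimonoid) (r : tree S -> B) (f : der_car r) :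
  deriv r (der_rep f) = sval f.
Proof. rewrite /der_rep; case: constructive_indefinite_description => t ht //. Qed.

Lemma hom_der (S : ranked_alphabet) (B : strong_bimonoid) (r : tree S -> B) t :
  sval (hom (alg_op (der_alg r)) t) = deriv r t.
Proof.
elim: t => s ts IH /=.
apply: functional_extensionality => c.
have : equivr r (Node s (fun i => der_rep (hom (alg_op (der_alg r)) (ts i)))) (Node s ts).
  apply: equiv_cong => i c'.
  have := der_rep_spec (hom (alg_op (der_alg r)) (ts i)); rewrite IH => e.
  by rewrite -/(deriv r _ c') e.
by move/(_ c).
Qed.

Lemma hom_prod (S : ranked_alphabet) B n (K : 'I_n -> sbalg S B) t i :
  hom (alg_op (prod_alg K)) t i = hom (alg_op (K i)) t.
Proof.
elim: t => s ts IH /=; congr (alg_op (K i) s); apply: functional_extensionality => j.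
exact: IH.
Qed.

Lemma hV_subst (S : ranked_alphabet) B (A : wta S B) c xi xi' :
  h_V A xi = h_V A xi' -> h_V A (subst c xi) = h_V A (subst c xi').
Proof.
move=> E; elim: c => o ts IH; case: o ts IH => [s|] ts IH //=.
rewrite /h_V /=; congr (@vec_op S B A s); apply: functional_extensionality => i; exact: IH.
Qed.

Lemma no0 (i : 'I_0) : False. Proof. by case: i. Qed.

Definition boxt (S : ranked_alphabet) : tree (box_alphabet S) :=
  @Node (box_alphabet S) None (fun i : 'I_0 => False_rect _ (no0 i)).

Lemma count_boxt (S : ranked_alphabet) : count_box (boxt S) = 1.
Proof. by rewrite /= big_ord0. Qed.

Definition boxc (S : ranked_alphabet) : context S := exist _ (boxt S) (count_boxt S).

Theorem theorem6p7 (S : ranked_alphabet) (B : strong_bimonoid) (A : wta S B)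
  (n : nat) (q : 'I_n -> wta_Q A) (hq : bijective q) :
  exists G' : alg_car (acc (prod_alg (fun i : 'I_n => der_alg (h_Vq A (q i))))) -> B,
    sbalg_iso (nerode A)
      (final_variant (acc (prod_alg (fun i : 'I_n => der_alg (h_Vq A (q i))))) G').
Proof.
set P := prod_alg _.
pose N := vec_alg_FN A.
have key : forall t t', h_alg P t = h_alg P t' <-> h_alg N t = h_alg N t'.
  move=> t t'; split => E.
    change (h_V A t = h_V A t'); apply: functional_extensionality => p.
    case: hq => g qg gq; rewrite -(gq p).
    have := f_equal (fun f => sval (f (g p))) E.
    rewrite /h_alg !hom_prod !hom_der => /(f_equal (fun f => f (boxc S))).
    by [].
  apply: functional_extensionality_dep => i; apply: sig_eqP.
  rewrite /h_alg !hom_prod !hom_der; apply: functional_extensionality => c.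
  rewrite /deriv /h_Vq; by rewrite (hV_subst (sval c) E).
pose phi := fun v : acc_car N => mkacc P (pick v).
pose psi := fun p : acc_car P => mkacc N (pick p).
have phiE : forall t, phi (mkacc N t) = mkacc P t.
  move=> t; apply: sig_eqP => /=; apply/key; by rewrite pickP.
have psiE : forall t, psi (mkacc P t) = mkacc N t.
  move=> t; apply: sig_eqP => /=; apply/key; by rewrite pickP.
exists (fun p => alg_root (nerode A) (psi p)), phi; split.
- exists psi => x; [rewrite (mk_pick x) phiE psiE // | rewrite (mk_pick x) psiE phiE //].
- move=> s ps.
  have -> : ps = fun i => mkacc N (pick (ps i)).
    apply: functional_extensionality => i; exact: mk_pick.
  have -> : (fun i => phi (mkacc N (pick (ps i)))) = fun i => mkacc P (pick (ps i)).
    apply: functional_extensionality => i; exact: phiE.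
  rewrite (opE N) phiE.
  exact: (esym (opE P _)).
- move=> p.
  change (alg_root (nerode A) p = alg_root (nerode A) (psi (phi p))).
  have e := phiE (pick p); rewrite -mk_pick in e.
  by rewrite e psiE -mk_pick.
Qed.
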